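(* Consider the self-attention dynamics with LayerNorm, $X^{(t+1)}=D^{(t)}A^{(t)}X^{(t)}W_V^{(t)}$. Let $\mathcal{G}$ be strongly connected with radius $r$, assume \textbf{A1} and \textbf{A2}, assume that $W_V^{(t)}\in\mathbb{R}^{d\times d}$ is orthogonal for all $t\ge0$, and assume the initial input $X^{(0)}$ (with rows of unit Euclidean norm) satisfies $N\le d$ and $X^{(0)}$ has full rank $N$. Then there exist $C>0$ and $\epsilon>0$ with $N\epsilon<1$ such that $$\mu(X^{(t)})\le C\,(1-N\epsilon^{2r})^{t/(2r)}\qquad\text{for all }t\ge0,$$ i.e. all tokens converge exponentially to a common point of the unit sphere $\mathbb{S}^{d-1}$.
   Context: Tokens are the rows of $X\in\mathbb{R}^{N\times d}$. An attention mask is a directed graph $\mathcal{G}$ on $[N]$ with edge set $E(\mathcal{G})$; $(j,i)\in E(\mathcal{G})$ means token $i$ attends to token $j$; $\mathcal{N}_i=\{k:(k,i)\in E(\mathcal{G})\}$. Masked softmax: $\mathrm{softmax}_{\mathcal{G}}(R)_{ij}=\exp(R_{ij})/\sum_{k\in\mathcal{N}_i}\exp(R_{ik})$ if $(j,i)\in E(\mathcal{G})$, else $0$. $A^{(t)}=\mathrm{softmax}_{\mathcal{G}}\big(X^{(t)}W_Q^{(t)}(X^{(t)}W_K^{(t)})^\top/\sqrt{d_{QK}}\big)$ with fixed $d_{QK}>0$, $W_Q^{(t)},W_K^{(t)}\in\mathbb{R}^{d\times d'}$. LayerNorm (scaling only): $D^{(t)}=\mathrm{diag}(d_1,\dots,d_N)$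 with $d_i=1/\|(A^{(t)}X^{(t)}W_V^{(t)})_{i,:}\|_2$, so every row of $X^{(t+1)}$ has unit norm. The mask is the same for all $t$. \textbf{A1}: $(i,i)\in E(\mathcal{G})$ for all $i$. \textbf{A2}: $\sup_t\max\{\|W_Q^{(t)}\|_2,\|W_K^{(t)}\|_2\}<\infty$. $\mu(X)=\|X-\mathbf{1}\mathbf{1}^\top X/N\|_F$ with $\mathbf{1}\in\mathbb{R}^N$ the all-ones vector. $\mathcal{G}$ is strongly connected if any two distinct nodes are reachable from each other by directed paths. The radius of $\mathcal{G}$ is $\min_{c}\max_v\mathrm{dist}(c,v)$, the minimum over center nodes $c$ (nodes from which every node is reachable), where $\mathrm{dist}(u,v)$ is the length of a shortest directed path from $u$ to $v$. *)

(* Defs.v *)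
From HB Require Import structures.
From mathcomp Require Import all_boot all_order all_algebra.
From mathcomp Require Import all_classical all_reals all_analysis.
Set Implicit Arguments. Unset Strict Implicit. Unset Printing Implicit Defensive.
Import Order.TTheory GRing.Theory Num.Theory.
Local Open Scope ring_scope.

(* Attention mask: a relation E on 'I_N; [E j i] means (j,i) \in E(G),
   i.e. token i attends to token j. *)

Definition path_le (N : nat) (E : rel 'I_N) (k : nat) (u v : 'I_N) : Prop :=
  exists p : seq 'I_N, [/\ path E u p, last u p = v & (size p <= k)%N].

Definition strongly_connected (N : nat) (E : rel 'I_N) : Prop :=
  forall u v : 'I_N, connect E u v.

Definition is_radius (N : nat) (E : rel 'I_N) (r : nat) : Prop :=
  (exists c : 'I_N, forall v, path_le E r c v) /\
  (forall (c : 'I_N) (k : nat), (forall v, path_le E k c v) -> (r <= k)%N).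

Definition rownorm (R : realType) (m n : nat) (Y : 'M[R]_(m, n)) (i : 'I_m) : R :=
  Num.sqrt (\sum_(j < n) Y i j ^+ 2).

Definition softmaxG (R : realType) (N : nat) (E : rel 'I_N) (S : 'M[R]_N)
  : 'M[R]_N :=
  \matrix_(i, j) (if E j i then
       expR (S i j) / \sum_(k < N | E k i) expR (S i k) else 0).

Definition attn (R : realType) (N d d' : nat) (E : rel 'I_N) (dQK : R)
  (X : 'M[R]_(N, d)) (WQ WK : 'M[R]_(d, d')) : 'M[R]_N :=
  softmaxG E ((Num.sqrt dQK)^-1 *: ((X *m WQ) *m (X *m WK)^T)).

Definition LNdiag (R : realType) (N d : nat) (Y : 'M[R]_(N, d)) : 'M[R]_N :=
  diag_mx (\row_i (rownorm Y i)^-1).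

Definition sa_step (R : realType) (N d d' : nat) (E : rel 'I_N) (dQK : R)
  (X : 'M[R]_(N, d)) (WQ WK : 'M[R]_(d, d')) (WV : 'M[R]_d) : 'M[R]_(N, d) :=
  let Y := attn E dQK X WQ WK *m X *m WV in LNdiag Y *m Y.

Definition vnorm (R : realType) (n : nat) (x : 'cV[R]_n) : R :=
  Num.sqrt (\sum_(i < n) x i 0 ^+ 2).

Definition opnorm_le (R : realType) (m n : nat) (W : 'M[R]_(m, n)) (B : R) : Prop :=
  forall x : 'cV[R]_n, vnorm (W *m x) <= B * vnorm x.

Definition mu (R : realType) (N d : nat) (X : 'M[R]_(N, d)) : R :=
  Num.sqrt (\sum_(i < N) \sum_(j < d)
    (X i j - (N%:R)^-1 * \sum_(k < N) X k j) ^+ 2).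

(* Main.v *)
Require Import Defs.
From HB Require Import structures.
From mathcomp Require Import all_boot all_order all_algebra.
From mathcomp Require Import all_classical all_reals all_analysis.
From mathcomp Require Import ring lra.
Set Implicit Arguments. Unset Strict Implicit. Unset Printing Implicit Defensive.
Import Order.TTheory GRing.Theory Num.Theory.
Local Open Scope ring_scope.

Lemma path_le_pred (N : nat) (E : rel 'I_N) (s : nat) (c v : 'I_N) :
  (forall i, E i i) -> Defs.path_le E s.+1 c v -> exists w, Defs.path_le E s c w /\ E w v.
Proof.
move=> hE [p [hp hl hs]].
case: (lastP p) hp hl hs => [|p' x].
  move=> _ /= <- _; exists c; split => //; exists [::]; split => //.
rewrite rcons_path last_rcons size_rcons => /andP[hp' hx] <- hs.
exists (last c p'); split => //; exists p'; split => //.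
Qed.

Lemma conv_lower (R : realType) (N : nat) (lam x : 'I_N -> R) (a : R) (w : 'I_N) :
  (forall j, 0 <= lam j) -> \sum_j lam j = 1 -> (forall j, a <= x j) ->
  a + lam w * (x w - a) <= \sum_j lam j * x j.
Proof.
move=> h0 h1 ha.
have -> : \sum_j lam j * x j = a + \sum_j lam j * (x j - a).
  have -> : \sum_j lam j * (x j - a) = \sum_j lam j * x j - a.
    rewrite -[X in _ - X]mul1r -h1 mulr_suml -sumrB.
    by apply: eq_bigr => j _; ring.
  ring.
rewrite lerD2l (bigD1 w) //= lerDl sumr_ge0 // => j _.
by rewrite mulr_ge0 // subr_ge0.
Qed.

Lemma conv_bounds (R : realType) (N : nat) (lam x : 'I_N -> R) (a b : R) :
  (forall j, 0 <= lam j) -> \sum_j lam j = 1 -> (forall j, a <= x j <= b) ->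
  a <= \sum_j lam j * x j <= b.
Proof.
move=> h0 h1 ha; apply/andP; split.
  rewrite -[a]mul1r -h1 mulr_suml; apply: ler_sum => j _.
  by rewrite ler_wpM2l //; case/andP: (ha j).
rewrite -[b]mul1r -h1 mulr_suml; apply: ler_sum => j _.
by rewrite ler_wpM2l //; case/andP: (ha j).
Qed.

Lemma bounds_persist (R : realType) (N : nat) (lam : nat -> 'I_N -> 'I_N -> R)
  (u : nat -> 'I_N -> R) :
  (forall t i j, 0 <= lam t i j) -> (forall t i, \sum_j lam t i j = 1) ->
  (forall t i, u t.+1 i = \sum_j lam t i j * u t j) ->
  forall t a b, (forall i, a <= u t i <= b) -> forall s i, a <= u (t + s)%N i <= b.
Proof.
move=> h0 h1 hu t a b hab; elim => [|s IH] i; first by rewrite addn0.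
by rewrite addnS hu; apply: conv_bounds.
Qed.

Lemma doeblin_lower (R : realType) (N : nat) (E : rel 'I_N)
  (lam : nat -> 'I_N -> 'I_N -> R) (u : nat -> 'I_N -> R) (g : R) (c : 'I_N) :
  (forall i, E i i) -> 0 <= g ->
  (forall t i j, 0 <= lam t i j) -> (forall t i, \sum_j lam t i j = 1) ->
  (forall t i j, E j i -> g <= lam t i j) ->
  (forall t i, u t.+1 i = \sum_j lam t i j * u t j) ->
  forall t a, (forall i, a <= u t i) ->
  forall s v, Defs.path_le E s c v -> a + g ^+ s * (u t c - a) <= u (t + s)%N v.
Proof.
move=> hE hg h0 h1 hg' hu t a ha.
have hac : 0 <= u t c - a by rewrite subr_ge0.
have hall : forall s i, a <= u (t + s)%N i.
  move=> s i.
  have := @bounds_persist R N lam u h0 h1 hu t a (\sum_k `|u t k|).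
  case/(_ _ s i)/andP => // j; rewrite ha /=.
  by rewrite (le_trans (ler_norm _)) // (bigD1 j) //= lerDl sumr_ge0.
elim => [|s IH] v.
  by case=> p [_ hl hs]; move: hs; rewrite leqn0 size_eq0 => /eqP hp;
    move: hl; rewrite hp /= => <-; rewrite addn0 expr0 mul1r; lra.
case/(path_le_pred hE) => w [hw hwv].
have := IH w hw => hIH.
rewrite addnS hu.
apply: le_trans (conv_lower w (h0 _ v) (h1 _ v) (hall s)).
rewrite lerD2l exprS -mulrA.
apply: (@le_trans _ _ (lam (t + s)%N v w * (g ^+ s * (u t c - a)))).
  by apply: ler_wpM2r; [rewrite mulr_ge0 ?exprn_ge0 | exact: hg'].
rewrite ler_wpM2l //; lra.
Qed.

Lemma doeblin_contract (R : realType) (N : nat) (E : rel 'I_N)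
  (lam : nat -> 'I_N -> 'I_N -> R) (u : nat -> 'I_N -> R) (g : R) (c : 'I_N) (r : nat) :
  (forall i, E i i) -> 0 <= g -> g <= 1 ->
  (forall t i j, 0 <= lam t i j) -> (forall t i, \sum_j lam t i j = 1) ->
  (forall t i j, E j i -> g <= lam t i j) ->
  (forall t i, u t.+1 i = \sum_j lam t i j * u t j) ->
  (forall v, Defs.path_le E r c v) ->
  forall t D, (forall i j, `|u t i - u t j| <= D) ->
  forall i j, `|u (t + r)%N i - u (t + r)%N j| <= (1 - g ^+ r) * D.
Proof.
move=> hE hg hg1 h0 h1 hg' hu hc t D hD.
have [m _ hm] := @arg_minP _ _ _ c xpredT (u t) isT.
have [M _ hM] := @arg_maxP _ _ _ c xpredT (u t) isT.
have low := @doeblin_lower R N E lam u g c hE hg h0 h1 hg' hu t (u t m)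
  (fun i => hm i isT) r.
pose w t i := - u t i.
have hw : forall t i, w t.+1 i = \sum_j lam t i j * w t j.
  by move=> t' i; rewrite /w hu -sumrN; apply: eq_bigr => j _; rewrite mulrN.
have up := @doeblin_lower R N E lam w g c hE hg h0 h1 hg' hw t (- u t M)
  (fun i => ltac:(rewrite /w lerN2; exact: hM)) r.
have hgr : 0 <= g ^+ r <= 1 by rewrite exprn_ge0 // exprn_ile1.
have hmM : u t M - u t m <= D by apply: le_trans (ler_norm _) (hD _ _).
have key : forall i j, u (t + r)%N i - u (t + r)%N j <= (1 - g ^+ r) * D.
  move=> i j.
  have := low j (hc j); have := up i (hc i); rewrite /w.
  have hcm : u t m <= u t c by apply: hm.
  have hcM : u t c <= u t M by apply: hM.
  move: hgr => /andP[hg0 hg1'] h2 h3.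
  have : (1 - g ^+ r) * (u t M - u t m) <= (1 - g ^+ r) * D.
    by rewrite ler_wpM2l // subr_ge0.
  nra.
move=> i j; rewrite ler_norml; apply/andP; split; last exact: key.
by rewrite lerNl opprB key.
Qed.

Lemma doeblin_decay (R : realType) (N : nat) (E : rel 'I_N)
  (lam : nat -> 'I_N -> 'I_N -> R) (u : nat -> 'I_N -> R) (g : R) (c : 'I_N) (r : nat) :
  (forall i, E i i) -> 0 <= g -> g <= 1 -> (0 < r)%N ->
  (forall t i j, 0 <= lam t i j) -> (forall t i, \sum_j lam t i j = 1) ->
  (forall t i j, E j i -> g <= lam t i j) ->
  (forall t i, u t.+1 i = \sum_j lam t i j * u t j) ->
  (forall v, Defs.path_le E r c v) ->
  (forall t i, 0 <= u t i <= 1) ->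
  forall t i j, `|u t i - u t j| <= (1 - g ^+ r) ^+ (t %/ r).
Proof.
move=> hE hg hg1 hr h0 h1 hg' hu hc h01.
have hb : 0 <= 1 - g ^+ r by rewrite subr_ge0 exprn_ile1.
suff H : forall q t, (q * r <= t)%N -> forall i j, `|u t i - u t j| <= (1 - g ^+ r) ^+ q.
  by move=> t; apply: H; apply: leq_trunc_div.
elim => [|q IH] t hq i j.
  rewrite expr0; have := h01 t i; have := h01 t j.
  move=> /andP[? ?] /andP[? ?]; rewrite ler_norml; apply/andP; split; lra.
have -> : t = ((t - r) + r)%N by rewrite subnK // (leq_trans _ hq) // mulSn leq_addr.
rewrite exprS.
apply: (doeblin_contract hE hg hg1 h0 h1 hg' hu hc) => i' j'.
apply: IH; rewrite leq_subRL ?(leq_trans _ hq) ?mulSn ?leq_addr //.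
Qed.

Lemma abs_le_sqrt_sum (R : realType) (n : nat) (f : 'I_n -> R) (i : 'I_n) :
  `|f i| <= Num.sqrt (\sum_k f k ^+ 2).
Proof.
rewrite -sqrtr_sqr ler_sqrt ?sumr_ge0 // => [|k _]; last exact: sqr_ge0.
by rewrite (bigD1 i) //= lerDl sumr_ge0 // => k _; exact: sqr_ge0.
Qed.

Lemma rownorm_ge0 (R : realType) m n (M : 'M[R]_(m, n)) i : 0 <= rownorm M i.
Proof. exact: sqrtr_ge0. Qed.

Lemma rownorm_entry (R : realType) m n (M : 'M[R]_(m, n)) i j : `|M i j| <= rownorm M i.
Proof. exact: (abs_le_sqrt_sum (fun k => M i k)). Qed.

Lemma rownormE (R : realType) m n (M : 'M[R]_(m, n)) i :
  rownorm M i = Num.sqrt ((M *m M^T) i i).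
Proof. by rewrite /rownorm !mxE; congr Num.sqrt; apply: eq_bigr => k _; rewrite mxE expr2. Qed.

Lemma rownorm_orth (R : realType) m n (M : 'M[R]_(m, n)) (O : 'M[R]_n) i :
  O *m O^T = 1%:M -> rownorm (M *m O) i = rownorm M i.
Proof.
move=> hO; rewrite !rownormE trmx_mul mulmxA -(mulmxA M) hO mulmx1 //.
Qed.

Lemma NrmE (R : realType) m n (M : 'M[R]_(m, n)) i j :
  (LNdiag M *m M) i j = (rownorm M i)^-1 * M i j.
Proof. by rewrite /LNdiag mul_diag_mx !mxE. Qed.

Lemma Nrm_orth (R : realType) m n (M : 'M[R]_(m, n)) (O : 'M[R]_n) :
  O *m O^T = 1%:M -> LNdiag (M *m O) *m (M *m O) = (LNdiag M *m M) *m O.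
Proof.
move=> hO; apply/matrixP => i j; rewrite NrmE rownorm_orth // !mxE mulr_sumr.
by apply: eq_bigr => k _; rewrite NrmE mulrA.
Qed.

Lemma Nrm_scale (R : realType) m n (M : 'M[R]_(m, n)) (s : 'rV[R]_m) :
  (forall i, 0 < s 0 i) ->
  LNdiag (diag_mx s *m M) *m (diag_mx s *m M) = LNdiag M *m M.
Proof.
move=> hs; apply/matrixP => i j; rewrite !NrmE.
have -> : rownorm (diag_mx s *m M) i = s 0 i * rownorm M i.
  rewrite /rownorm.
  have -> : \sum_k (diag_mx s *m M) i k ^+ 2 = s 0 i ^+ 2 * \sum_k M i k ^+ 2.
    by rewrite mulr_sumr; apply: eq_bigr => k _; rewrite mul_diag_mx mxE exprMn.
  by rewrite sqrtrM ?sqr_ge0 // sqrtr_sqr gtr0_norm.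
rewrite mul_diag_mx mxE invfM.
have hs0 : s 0 i != 0 by rewrite gt_eqF.
by rewrite [_ / _]mulrC -mulrA mulKf.
Qed.

Lemma rownorm_Nrm_le1 (R : realType) m n (M : 'M[R]_(m, n)) i :
  rownorm (LNdiag M *m M) i <= 1.
Proof.
have -> : rownorm (LNdiag M *m M) i = (rownorm M i)^-1 * rownorm M i.
  rewrite /rownorm.
  have -> : \sum_k (LNdiag M *m M) i k ^+ 2 = (rownorm M i)^-1 ^+ 2 * \sum_k M i k ^+ 2.
    by rewrite mulr_sumr; apply: eq_bigr => k _; rewrite NrmE exprMn.
  rewrite sqrtrM ?sqr_ge0 // sqrtr_sqr ger0_norm // invr_ge0 rownorm_ge0 //.
have [->|h] := eqVneq (rownorm M i) 0; first by rewrite invr0 mul0r.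
by rewrite mulVf.
Qed.

Definition cen (R : realType) (N d : nat) (M : 'M[R]_(N, d)) : 'M[R]_(N, d) :=
  \matrix_(i, j) (M i j - (N%:R)^-1 * \sum_(k < N) M k j).

Lemma muE (R : realType) (N d : nat) (M : 'M[R]_(N, d)) :
  mu M = Num.sqrt (\sum_i rownorm (cen M) i ^+ 2).
Proof.
rewrite /mu; congr Num.sqrt; apply: eq_bigr => i _.
rewrite /rownorm sqr_sqrtr ?sumr_ge0 // => [|k _]; last exact: sqr_ge0.
by apply: eq_bigr => j _; rewrite mxE.
Qed.

Lemma cen_mul (R : realType) (N d : nat) (M : 'M[R]_(N, d)) (O : 'M[R]_d) :
  cen (M *m O) = cen M *m O.
Proof.
apply/matrixP => i j; rewrite !mxE.
under [X in _ * X]eq_bigr do rewrite mxE.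
rewrite exchange_big /= mulr_sumr -sumrB; apply: eq_bigr => l _.
rewrite !mxE mulrBl; congr (_ - _); by rewrite -mulrA mulr_suml.
Qed.

Lemma mu_orth (R : realType) (N d : nat) (M : 'M[R]_(N, d)) (O : 'M[R]_d) :
  O *m O^T = 1%:M -> mu (M *m O) = mu M.
Proof.
move=> hO; rewrite !muE cen_mul; congr Num.sqrt; apply: eq_bigr => i _.
by rewrite rownorm_orth.
Qed.



Lemma opnorm_entry (R : realType) m n (W : 'M[R]_(m, n)) B :
  opnorm_le W B -> forall i l, `|W i l| <= B.
Proof.
move=> hW i l; have := hW (delta_mx l 0).
have -> : vnorm (delta_mx l 0 : 'cV[R]_n) = 1.
  rewrite /vnorm (bigD1 l) //= big1 ?addr0 ?mxE ?eqxx ?expr1n ?sqrtr1 // => k hk.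
  by rewrite mxE (negPf hk) /= expr0n.
rewrite mulr1 => h; apply: le_trans h.
have -> : W i l = (W *m (delta_mx l 0 : 'cV[R]_n)) i 0.
  rewrite mxE (bigD1 l) //= big1 ?addr0 ?mxE ?eqxx ?mulr1 // => k hk.
  by rewrite mxE (negPf hk) mulr0.
exact: (abs_le_sqrt_sum (fun k => (W *m (delta_mx l 0 : 'cV[R]_n)) k 0)).
Qed.

Lemma mulmx_entry_bound (R : realType) (N d d' : nat) (X : 'M[R]_(N, d))
  (W : 'M[R]_(d, d')) B :
  (forall i l, `|X i l| <= 1) -> (forall i l, `|W i l| <= B) ->
  forall i l, `|(X *m W) i l| <= d%:R * B.
Proof.
move=> hX hW i l; rewrite mxE (le_trans (ler_norm_sum _ _ _)) //.
rewrite -[d in d%:R]card_ord mulr_natl -sumr_const; apply: ler_sum => k _.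
rewrite normrM -[B]mul1r; apply: ler_pM => //; exact: normr_ge0.
Qed.

Definition Kb (R : realType) (d d' : nat) (dQK B : R) : R :=
  (Num.sqrt dQK)^-1 * (d'%:R * (d%:R * B) ^+ 2).

Lemma score_bound (R : realType) (N d d' : nat) (dQK : R) (X : 'M[R]_(N, d))
  (WQ WK : 'M[R]_(d, d')) B :
  0 < dQK -> (forall i l, `|X i l| <= 1) ->
  (forall i l, `|WQ i l| <= B) -> (forall i l, `|WK i l| <= B) ->
  forall i j, `|((Num.sqrt dQK)^-1 *: ((X *m WQ) *m (X *m WK)^T)) i j| <= Kb d d' dQK B.
Proof.
move=> hd hX hQ hK i j; rewrite /Kb !mxE normrM.
have hs : 0 < (Num.sqrt dQK)^-1 by rewrite invr_gt0 sqrtr_gt0.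
rewrite ger0_norm; last exact: ltW hs.
rewrite ler_pM2l //.
rewrite (le_trans (ler_norm_sum _ _ _)) //.
rewrite -[d' in d'%:R]card_ord mulr_natl -sumr_const; apply: ler_sum => l _.
rewrite [(X *m WK)^T _ _]mxE normrM expr2.
have h1 := mulmx_entry_bound hX hQ i l.
have h2 := mulmx_entry_bound hX hK j l.
by apply: ler_pM; rewrite ?normr_ge0.
Qed.

Lemma attn_ge0 (R : realType) (N d d' : nat) (E : rel 'I_N) (dQK : R)
  (X : 'M[R]_(N, d)) (WQ WK : 'M[R]_(d, d')) i j : 0 <= attn E dQK X WQ WK i j.
Proof.
rewrite /attn /softmaxG mxE; case: (E j i) => //.
by rewrite divr_ge0 ?sumr_ge0 // => *; apply: ltW; apply: expR_gt0.
Qed.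

Lemma attn_sum (R : realType) (N d d' : nat) (E : rel 'I_N) (dQK : R)
  (X : 'M[R]_(N, d)) (WQ WK : 'M[R]_(d, d')) i :
  E i i -> \sum_j attn E dQK X WQ WK i j = 1.
Proof.
move=> hE; rewrite /attn /softmaxG.
under eq_bigr do rewrite mxE.
rewrite -big_mkcond /= -mulr_suml mulfV //.
by rewrite gt_eqF // (bigD1 i) //= ltr_pwDl ?expR_gt0 // sumr_ge0 // => *;
  exact: ltW (expR_gt0 _).
Qed.

Definition deltab (R : realType) (N : nat) (K : R) : R := expR (- K) / (N%:R * expR K).

Lemma attn_lower (R : realType) (N d d' : nat) (E : rel 'I_N) (dQK : R)
  (X : 'M[R]_(N, d)) (WQ WK : 'M[R]_(d, d')) (K : R) :
  (forall i j, `|((Num.sqrt dQK)^-1 *: ((X *m WQ) *m (X *m WK)^T)) i j| <= K) ->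
  forall i j, E j i -> deltab N K <= attn E dQK X WQ WK i j.
Proof.
move=> hS i j hE; rewrite /attn /softmaxG mxE hE.
set S := (Num.sqrt dQK)^-1 *: _.
have hden : 0 < \sum_(k | E k i) expR (S i k).
  by rewrite (bigD1 j) //= ltr_pwDl ?expR_gt0 // sumr_ge0 // => *;
    exact: ltW (expR_gt0 _).
have hN : (0 < N)%N by apply: leq_ltn_trans (leq0n i) (ltn_ord i).
have hNR : 0 < N%:R * expR K :> R by rewrite mulr_gt0 ?expR_gt0 ?ltr0n.
rewrite ler_pdivlMr // /deltab.
apply: (@le_trans _ _ (expR (- K))).
  apply: (@le_trans _ _ (expR (-K) / (N%:R * expR K) * (N%:R * expR K))); last first.
    by rewrite divfK ?gt_eqF.
  apply: ler_wpM2l; first by rewrite divr_ge0 ?(ltW hNR) ?(ltW (expR_gt0 _)).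
  rewrite -[N in N%:R]card_ord mulr_natl -sumr_const.
  rewrite (le_trans (y := \sum_(k | E k i) expR K)) //.
    by apply: ler_sum => k _; rewrite ler_expR; apply: le_trans (ler_norm _) (hS _ _).
  by rewrite [X in _ <= X](bigID (fun k => E k i)) /= lerDl sumr_ge0 // => *;
    exact: ltW (expR_gt0 _).
by rewrite ler_expR; have := hS i j; rewrite ler_norml => /andP[].
Qed.






Lemma sum_const_le (R : realType) (n : nat) (f : 'I_n -> R) (c : R) :
  (forall k, f k <= c) -> \sum_k f k <= n%:R * c.
Proof.
move=> h; rewrite -[n in n%:R]card_ord mulr_natl -sumr_const.
by apply: ler_sum => k _.
Qed.

Lemma mu_bound (R : realType) (N d : nat) (Z : 'M[R]_(N, d)) (W : R) :
  (0 < N)%N -> (forall i j l, `|Z i l - Z j l| <= W) ->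
  mu Z <= Num.sqrt (N%:R * d%:R) * W.
Proof.
move=> hN hZ.
case: d Z hZ => [|d] Z hZ.
  rewrite /mu mulr0 sqrtr0 mul0r big1 ?sqrtr0 // => i _; exact: big_ord0.
have hW : 0 <= W.
  by apply: le_trans (hZ (Ordinal hN) (Ordinal hN) ord0); exact: normr_ge0.
have hNR : 0 < N%:R :> R by rewrite ltr0n.
have hc : forall i j, `|Z i j - (N%:R)^-1 * \sum_(k < N) Z k j| <= W.
  move=> i j.
  have -> : Z i j - (N%:R)^-1 * \sum_(k < N) Z k j = (N%:R)^-1 * \sum_k (Z i j - Z k j).
    rewrite sumrB sumr_const card_ord mulrBr; congr (_ - _).
    rewrite -(mulr_natr (Z i j)) mulrCA mulVf ?mulr1 //.
    by rewrite gt_eqF.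
  have hNi : 0 <= (N%:R)^-1 :> R by rewrite invr_ge0 ltW.
  rewrite normrM (ger0_norm hNi).
  rewrite ler_pdivrMl // (le_trans (ler_norm_sum _ _ _)) //.
  exact: sum_const_le.
rewrite /mu -[W]ger0_norm // -sqrtr_sqr -sqrtrM ?mulr_ge0 ?ler0n //.
rewrite ler_sqrt ?mulr_ge0 ?sqr_ge0 ?ler0n // -mulrA.
apply: sum_const_le => i; apply: sum_const_le => j.
rewrite -real_normK ?num_real // ler_sqr ?nnegrE ?normr_ge0 //.
Qed.

Lemma Nrm_diff (R : realType) (m N d : nat) (U : 'M[R]_(m, N)) (X0 : 'M[R]_(N, d))
  (nu S : R) :
  0 < nu -> (forall i, nu <= rownorm (U *m X0) i) -> (forall k l, `|X0 k l| <= 1) ->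
  0 <= S -> (forall i j k, `|U i k - U j k| <= S) ->
  forall i j l, `|(LNdiag (U *m X0) *m (U *m X0)) i l - (LNdiag (U *m X0) *m (U *m X0)) j l|
     <= (N%:R * S + d%:R * (N%:R * S)) / nu.
Proof.
move=> hnu hn hX hS0 hS.
set V := U *m X0.
have hV : forall i j l, `|V i l - V j l| <= N%:R * S.
  move=> i j l; rewrite !mxE -sumrB.
  under eq_bigr do rewrite -mulrBl.
  apply: le_trans (ler_norm_sum _ _ _) _; apply: sum_const_le => k.
  rewrite normrM -[S]mulr1; apply: ler_pM; rewrite ?normr_ge0 //.
set n := rownorm V.
have hn0 : forall i, 0 < n i by move=> i; apply: lt_le_trans (hn i).
have hnn : forall i j, `|n i - n j| <= d%:R * (N%:R * S).
  move=> i j.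
  have hsum : 0 < n i + n j by rewrite addr_gt0.
  rewrite -(ler_pM2r hsum).
  have -> : `|n i - n j| * (n i + n j) = `|\sum_l (V i l - V j l) * (V i l + V j l)|.
    rewrite -(ger0_norm (ltW hsum)) -normrM; congr `|_|.
    have -> : (n i - n j) * (n i + n j) = n i ^+ 2 - n j ^+ 2 by ring.
    rewrite /n /rownorm !sqr_sqrtr ?sumr_ge0 // => [|k _|k _]; try exact: sqr_ge0.
    by rewrite -sumrB; apply: eq_bigr => l _; ring.
  apply: le_trans (ler_norm_sum _ _ _) _.
  rewrite -mulrA; apply: sum_const_le => l.
  rewrite normrM; apply: ler_pM; rewrite ?normr_ge0 //.
  apply: le_trans (ler_normD _ _) _; apply: lerD; exact: rownorm_entry.
move=> i j l; rewrite !NrmE -/V -/n.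
have hni := hn0 i; have hnj := hn0 j.
have -> : (n i)^-1 * V i l - (n j)^-1 * V j l =
    (n i)^-1 * ((V i l - V j l) + ((n j)^-1 * V j l) * (n j - n i)).
  by field; rewrite !gt_eqF.
have hii : 0 <= (n i)^-1 by rewrite invr_ge0 ltW.
rewrite normrM (ger0_norm hii) mulrC.
apply: ler_pM; rewrite ?normr_ge0 //; last by rewrite lef_pV2 ?posrE.
apply: le_trans (ler_normD _ _) _; apply: lerD; first exact: hV.
rewrite normrM -[X in _ <= X]mul1r; apply: ler_pM; rewrite ?normr_ge0 //.
  have hjj : 0 <= (n j)^-1 by rewrite invr_ge0 ltW.
  rewrite normrM (ger0_norm hjj) ler_pdivrMl // mulr1.
  exact: rownorm_entry.
Qed.

Lemma simplex_lb (R : realType) (m N d : nat) (U : 'M[R]_(m, N)) (X0 : 'M[R]_(N, d))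
  (RI : 'M[R]_(d, N)) :
  X0 *m RI = 1%:M -> forall i, (forall k, 0 <= U i k) -> \sum_k U i k = 1 ->
  1 <= rownorm (U *m X0) i * \sum_k \sum_l `|RI l k|.
Proof.
move=> hRI i h0 h1.
have -> : (1 : R) = \sum_k (U *m X0 *m RI) i k by rewrite -mulmxA hRI mulmx1.
rewrite mulr_sumr; apply: ler_sum => k _.
apply: le_trans (ler_norm _) _; rewrite mxE.
apply: le_trans (ler_norm_sum _ _ _) _; rewrite mulr_sumr; apply: ler_sum => l _.
by rewrite normrM ler_wpM2r ?normr_ge0 // rownorm_entry.
Qed.

Lemma simplex_ub (R : realType) (m N d : nat) (U : 'M[R]_(m, N)) (X0 : 'M[R]_(N, d)) :
  (forall k l, `|X0 k l| <= 1) -> forall i, (forall k, 0 <= U i k) -> \sum_k U i k = 1 ->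
  rownorm (U *m X0) i <= Num.sqrt d%:R.
Proof.
move=> hX i h0 h1; rewrite /rownorm ler_sqrt ?ler0n //.
rewrite -[X in _ <= X]mulr1; apply: sum_const_le => l.
have hv : `|(U *m X0) i l| <= 1.
  rewrite mxE -h1; apply: le_trans (ler_norm_sum _ _ _) _; apply: ler_sum => k _.
  rewrite normrM (ger0_norm (h0 k)) -[X in _ <= X]mulr1 ler_wpM2l //.
by rewrite -real_normK ?num_real // -(expr1n _ 2) ler_sqr ?nnegrE ?normr_ge0.
Qed.

Lemma final_num (R : realType) (N r : nat) (K0 g : R) :
  (0 < N)%N -> (0 < r)%N -> 0 < g -> g <= 2^-1 -> 0 <= K0 ->
  exists C eps : R, [/\ 0 < C, 0 < eps, N%:R * eps < 1 &
    forall t : nat, K0 * (1 - g ^+ r) ^+ (t %/ r) <=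
      C * powR (1 - N%:R * eps ^+ (2 * r)) (t%:R / (2 * r)%:R)].
Proof.
move=> hN hr hg hg2 hK.
have hNR : 1 <= N%:R :> R by rewrite ler1n.
have hgr : 0 < g ^+ r by rewrite exprn_gt0.
have hgr1 : g ^+ r <= g by rewrite ler_iXnr // ?ltW //; lra.
set be := 1 - g ^+ r.
have hbe : 2^-1 <= be by rewrite /be; lra.
have hbe0 : 0 < be by lra.
have hbe1 : be <= 1 by rewrite /be; lra.
set eps := g / (2 * N%:R).
have hNp : 0 < 2 * N%:R :> R by lra.
have heps : 0 < eps by rewrite divr_gt0.
have hNeps : N%:R * eps = g / 2.
  by rewrite /eps; field; rewrite gt_eqF // (lt_le_trans ltr01 hNR).
have heps1 : eps <= g.
  rewrite /eps ler_pdivrMr // ler_peMr ?ltW //; lra.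
have hepsr : N%:R * eps ^+ (2 * r) <= g ^+ r.
  rewrite mul2n -addnn exprD mulrA.
  have h1 : N%:R * eps ^+ r <= 1.
    apply: le_trans (_ : N%:R * eps <= 1); last lra.
    by rewrite ler_wpM2l ?ler0n // ler_iXnr // ?ltW //; lra.
  have h2 : eps ^+ r <= g ^+ r.
    by apply: lerXn2r => //; rewrite nnegrE; [exact: ltW | exact: ltW hg].
  have h3 : 0 <= eps ^+ r by rewrite exprn_ge0 // ltW.
  have h4 : 0 <= N%:R * eps ^+ r by rewrite mulr_ge0 ?ler0n.
  nra.
set b := 1 - N%:R * eps ^+ (2 * r).
have hb : be <= b by rewrite /b /be; lra.
exists (K0 / be + 1), eps; split => //.
- by rewrite ltr_pwDr // divr_ge0 // ltW.
- by rewrite hNeps; lra.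
move=> t.
set q := (t %/ r)%N.
have hpow : (1 - g ^+ r) ^+ q <= powR b (t%:R / (2 * r)%:R) / be.
  rewrite -/be ler_pdivlMr // -exprSr -powR_mulrn; last exact: ltW.

  have hr0 : 0 < r%:R :> R by rewrite ltr0n.
  have ht0 : 0 <= t%:R / (2 * r)%:R :> R by rewrite divr_ge0 ?ler0n.
  apply: (@le_trans _ _ (powR be (t%:R / r%:R))).
    apply: ger_powR; first by rewrite hbe0 hbe1.
    rewrite ler_pdivrMr // -natrM ler_nat.
    by rewrite /q mulSn addnC ltnW // {1}(divn_eq t r) ltn_add2l ltn_pmod.
  apply: (@le_trans _ _ (powR be (t%:R / (2 * r)%:R))).
    apply: ger_powR; first by rewrite hbe0 hbe1.
    rewrite natrM ler_wpM2l ?ler0n // lef_pV2 ?posrE ?mulr_gt0 //.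
    lra.
  apply: ge0_ler_powR => //; rewrite nnegrE; lra.
apply: (@le_trans _ _ (K0 * (powR b (t%:R / (2 * r)%:R) / be))).
  by rewrite ler_wpM2l.
rewrite mulrA mulrDl mul1r -/b mulrAC lerDl powR_ge0 //.
Qed.

Definition lamf (R : realType) (N d : nat) (A : 'M[R]_N) (V : 'M[R]_(N, d)) : 'M[R]_N :=
  \matrix_(i, j) ((A i j / rownorm V j) / (\sum_k (A i k / rownorm V k))).

Lemma lamf_props (R : realType) (N d : nat) (A : 'M[R]_N) (V : 'M[R]_(N, d)) :
  (forall i j, 0 <= A i j) -> (forall i, 0 < A i i) -> (forall j, 0 < rownorm V j) ->
  [/\ forall i j, 0 <= lamf A V i j, forall i, \sum_j lamf A V i j = 1 &
      forall i, 0 < \sum_k (A i k / rownorm V k)].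
Proof.
move=> hA hAi hV.
have hs : forall i, 0 < \sum_k (A i k / rownorm V k).
  move=> i; rewrite (bigD1 i) //= ltr_pwDl ?divr_gt0 // sumr_ge0 // => k _.
  by rewrite divr_ge0 // ltW.
split => [i j|i|//].
  by rewrite mxE divr_ge0 ?divr_ge0 // ltW.
under eq_bigr do rewrite mxE.
by rewrite -mulr_suml mulfV // gt_eqF.
Qed.

Lemma step_repr (R : realType) (N d : nat) (A : 'M[R]_N) (V : 'M[R]_(N, d))
  (Q W : 'M[R]_d) :
  (forall i j, 0 <= A i j) -> (forall i, 0 < A i i) -> (forall j, 0 < rownorm V j) ->
  (Q *m W) *m (Q *m W)^T = 1%:M ->
  let Y := A *m ((LNdiag V *m V) *m Q) *m W in
  LNdiag Y *m Y = (LNdiag (lamf A V *m V) *m (lamf A V *m V)) *m (Q *m W).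
Proof.
move=> hA hAi hV hQW Y.
have [_ _ hs] := lamf_props hA hAi hV.
set s := \row_i (\sum_k (A i k / rownorm V k)).
have hY : Y = diag_mx s *m ((lamf A V *m V) *m (Q *m W)).
  rewrite /Y (mulmxA A).
  have -> : A *m (LNdiag V *m V) = diag_mx s *m (lamf A V *m V).
    apply/matrixP => i l; rewrite mul_diag_mx !mxE mulr_sumr.
    apply: eq_bigr => j _; rewrite NrmE !mxE.
    have := hs i; set si := \sum_k _ => hsi.
    have := hV j; set nj := rownorm V j => hnj.
    by field; rewrite !gt_eqF.
  by rewrite !mulmxA.
rewrite hY Nrm_scale; last by move=> i; rewrite mxE.
by rewrite Nrm_orth.
Qed.

Fixpoint Useq (R : realType) (N d : nat) (A : nat -> 'M[R]_N) (X0 : 'M[R]_(N, d))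
  (t : nat) : 'M[R]_N :=
  if t is t'.+1 then lamf (A t') (Useq A X0 t' *m X0) *m Useq A X0 t' else 1%:M.

Fixpoint Qseq (R : realType) (d : nat) (WV : nat -> 'M[R]_d) (t : nat) : 'M[R]_d :=
  if t is t'.+1 then Qseq WV t' *m WV t' else 1%:M.

Lemma id_simplex (R : realType) (N : nat) (i : 'I_N) :
  (forall k, 0 <= (1%:M : 'M[R]_N) i k) /\ \sum_k (1%:M : 'M[R]_N) i k = 1.
Proof.
split => [k|]; first by rewrite mxE ler0n.
rewrite (bigD1 i) //= big1 ?addr0 ?mxE ?eqxx // => k hk.
by rewrite mxE eq_sym (negPf hk).
Qed.

Unset Implicit Arguments.

Theorem theorem2 (R : realType) (N d d' : nat) (E : rel 'I_N) (r : nat)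
  (dQK : R) (X : nat -> 'M[R]_(N, d)) (WQ WK : nat -> 'M[R]_(d, d'))
  (WV : nat -> 'M[R]_d) :
  0 < dQK ->
  strongly_connected E ->
  is_radius E r ->
  (forall i : 'I_N, E i i) ->
  (exists B : R, forall t, opnorm_le (WQ t) B /\ opnorm_le (WK t) B) ->
  (forall t, (WV t)^T *m WV t = 1%:M) ->
  (forall t, X t.+1 = sa_step E dQK (X t) (WQ t) (WK t) (WV t)) ->
  (forall i, rownorm (X 0%N) i = 1) ->
  (N <= d)%N ->
  \rank (X 0%N) = N ->
  exists C eps : R, [/\ 0 < C, 0 < eps, N%:R * eps < 1 &
    forall t : nat, mu (X t) <=
      C * powR (1 - N%:R * eps ^+ (2 * r)) (t%:R / (2 * r)%:R)].
Proof.
move=> hdQK _ [[c hc] _] hE [B hB] hWV hX hX0 hNd hrk.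
have hN : (0 < N)%N by apply: leq_ltn_trans (leq0n c) (ltn_ord c).
have hXb : forall t i l, `|X t i l| <= 1.
  case => [|t] i l; first by rewrite -(hX0 i) rownorm_entry.
  rewrite hX /sa_step; apply: le_trans (rownorm_entry _ _ _) _; exact: rownorm_Nrm_le1.
case: r hc => [|r] hc.
  have hcv : forall v, v = c.
    move=> v; case: (hc v) => p [_ hl hs]; move: hs; rewrite leqn0 size_eq0 => /eqP hp.
    by move: hl; rewrite hp /= => ->.
  exists 1, (N.+1%:R)^-1; split => //.
  - by rewrite ltr_pdivrMr ?ltr0n // mul1r ltr_nat.
  move=> t; rewrite mul1r; apply: le_trans (powR_ge0 _ _).
  apply: le_trans (mu_bound (W := 0) hN _) _; last by rewrite mulr0.
  by move=> i j l; rewrite (hcv i) (hcv j) subrr normr0.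
have hd : (0 < d)%N by apply: leq_trans hNd.
have [RI hRI] : exists RI, X 0%N *m RI = 1%:M by apply/row_freeP; rewrite /row_free hrk.
set X0 := X 0%N in hRI hX0 *.
set rho := \sum_k \sum_l `|RI l k|.
have hX0b : forall k l, `|X0 k l| <= 1 := hXb 0%N.
have hrho : 0 < rho.
  have [h0 h1] := id_simplex R c.
  have := simplex_lb (U := 1%:M : 'M[R]_N) hRI h0 h1.
  have := rownorm_ge0 (1%:M *m X0) c; rewrite -/rho; nra.
set nu := rho^-1.
have hnu0 : 0 < nu by rewrite invr_gt0.
have hnu : forall (U : 'M[R]_N) i, (forall k, 0 <= U i k) -> \sum_k U i k = 1 ->
    nu <= rownorm (U *m X0) i.
  move=> U i h0 h1; rewrite /nu -[rho^-1]mul1r ler_pdivrMr //.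
  exact: simplex_lb.
set A := fun t => attn E dQK (X t) (WQ t) (WK t).
have hBQ : forall t i l, `|WQ t i l| <= B by move=> t; apply: opnorm_entry (hB t).1.
have hBK : forall t i l, `|WK t i l| <= B by move=> t; apply: opnorm_entry (hB t).2.
set K := Kb d d' dQK B.
have hS : forall t i j, `|((Num.sqrt dQK)^-1 *: ((X t *m WQ t) *m (X t *m WK t)^T)) i j| <= K.
  by move=> t; apply: score_bound.
set del := deltab N K.
have hdel : 0 < del by rewrite divr_gt0 ?expR_gt0 // mulr_gt0 ?expR_gt0 ?ltr0n.
have hA0 : forall t i j, 0 <= A t i j by move=> *; apply: attn_ge0.
have hA1 : forall t i, \sum_j A t i j = 1 by move=> t i; apply: attn_sum.
have hAl : forall t i j, E j i -> del <= A t i j by move=> t; apply: attn_lower.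
have hAii : forall t i, 0 < A t i i by move=> t i; apply: lt_le_trans hdel (hAl t i i (hE i)).
set U := Useq A X0.
set Q := Qseq WV.
have inv : forall t, [/\ (forall i k, 0 <= U t i k), (forall i, \sum_k U t i k = 1),
    X t = (LNdiag (U t *m X0) *m (U t *m X0)) *m Q t & Q t *m (Q t)^T = 1%:M].
  elim => [|t [h0 h1 hXt hQt]].
    split => [i k|i||]; try by have [] := id_simplex R i.
      rewrite /U /Q /= mul1mx mulmx1; apply/matrixP => i l.
      by rewrite NrmE hX0 invr1 mul1r.
    by rewrite /Q /= trmx1 mulmx1.
  have hn : forall j, 0 < rownorm (U t *m X0) j.
    by move=> j; apply: lt_le_trans hnu0 (hnu _ _ (h0 j) (h1 j)).
  have hW' : WV t *m (WV t)^T = 1%:M by apply: mulmx1C; exact: hWV.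
  have hQW : (Q t *m WV t) *m (Q t *m WV t)^T = 1%:M.
    by rewrite trmx_mul mulmxA -(mulmxA (Q t)) hW' mulmx1.
  have [l0 l1 _] := lamf_props (hA0 t) (hAii t) hn.
  split.
  - move=> i k; rewrite /U /= mxE sumr_ge0 // => j _; exact: mulr_ge0.
  - move=> i; rewrite /U /=; under eq_bigr do rewrite mxE.
    rewrite exchange_big /=.
    under eq_bigr do rewrite -mulr_sumr h1 mulr1.
    exact: l1.
  - have := step_repr (hA0 t) (hAii t) hn hQW.
    rewrite -hXt /= => H; rewrite hX /sa_step -/(A t) H.
    by rewrite /U /Q /= !mulmxA.
  - exact: hQW.
set lam := fun t => lamf (A t) (U t *m X0).
have hnt : forall t j, 0 < rownorm (U t *m X0) j.
  move=> t j; have [h0 h1 _ _] := inv t.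
  by apply: lt_le_trans hnu0 (hnu _ _ (h0 j) (h1 j)).
have hnub : forall t j, rownorm (U t *m X0) j <= Num.sqrt d%:R.
  by move=> t j; have [h0 h1 _ _] := inv t; apply: simplex_ub.
have hl0 : forall t i j, 0 <= lam t i j.
  by move=> t; have [] := lamf_props (hA0 t) (hAii t) (hnt t).
have hl1 : forall t i, \sum_j lam t i j = 1.
  by move=> t; have [] := lamf_props (hA0 t) (hAii t) (hnt t).
have hsd : 0 < Num.sqrt d%:R :> R by rewrite sqrtr_gt0 ltr0n.
set g := Num.min (del * nu / Num.sqrt d%:R) 2^-1.
have hg0 : 0 < g.
  rewrite lt_min; apply/andP; split; last by rewrite invr_gt0 ltr0n.
  by rewrite divr_gt0 // mulr_gt0.
have hg2 : g <= 2^-1 by rewrite ge_min lexx orbT.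
have hlg : forall t i j, E j i -> g <= lam t i j.
  move=> t i j hji.
  have [_ _ hs] := lamf_props (hA0 t) (hAii t) (hnt t).
  have hsi := hs i.
  set s := \sum_k (A t i k / rownorm (U t *m X0) k) in hsi.
  have hsnu : s <= nu^-1.
    rewrite /s -[nu^-1]mul1r -(hA1 t i) mulr_suml; apply: ler_sum => k _.
    apply: ler_wpM2l; first exact: hA0.
    by rewrite lef_pV2 ?posrE // hnu; have [h0 h1 _ _] := inv t.
  have hnj := hnt t j; have hnjb := hnub t j.
  have hAij := hAl t i j hji.
  rewrite /lam mxE -/s.
  apply: le_trans (_ : del * nu / Num.sqrt d%:R <= _); first by rewrite ge_min lexx.
  set n := rownorm (U t *m X0) j in hnj hnjb *.
  rewrite ler_pdivlMr //.
  have hc0 : 0 <= del * nu / Num.sqrt d%:R.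
    by apply: divr_ge0; [apply: mulr_ge0; apply: ltW | apply: sqrtr_ge0].
  apply: le_trans (ler_wpM2l hc0 hsnu) _.
  have -> : del * nu / Num.sqrt d%:R * nu^-1 = del / Num.sqrt d%:R.
    by field; rewrite !gt_eqF.
  apply: le_trans (_ : del / n <= _).
    apply: ler_wpM2l; first exact: ltW.
    by rewrite lef_pV2 ?posrE.
  by rewrite ler_wpM2r // invr_ge0 ltW.
have hg1 : g <= 1 by apply: le_trans hg2 _; rewrite invf_le1 ?ler1n //; lra.
set be := 1 - g ^+ r.+1.
have hdecay : forall t i j k, `|U t i k - U t j k| <= be ^+ (t %/ r.+1).
  move=> t i j k.
  have hu : forall t i, U t.+1 i k = \sum_j lam t i j * U t j k.
    by move=> t' i'; rewrite /U /= mxE.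
  have h01 : forall t i, 0 <= U t i k <= 1.
    move=> t' i'; have [h0 h1 _ _] := inv t'; rewrite h0 /= -(h1 i').
    by rewrite (bigD1 k) //= lerDl sumr_ge0.
  exact: (doeblin_decay (u := fun t i => U t i k) hE (ltW hg0) hg1 (ltn0Sn r)
    hl0 hl1 hlg hu hc h01).
set K0 := Num.sqrt (N%:R * d%:R) * ((N%:R + d%:R * N%:R) / nu).
have hK0 : 0 <= K0.
  apply: mulr_ge0; first exact: sqrtr_ge0.
  by apply: divr_ge0; [apply: addr_ge0; rewrite ?mulr_ge0 ?ler0n | exact: ltW].
have hmu : forall t, mu (X t) <= K0 * be ^+ (t %/ r.+1).
  move=> t; have [h0 h1 hXt hQt] := inv t.
  rewrite hXt mu_orth //.
  have hbe0 : 0 <= be ^+ (t %/ r.+1).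
    by apply: le_trans (hdecay t c c c); apply: normr_ge0.
  apply: le_trans (mu_bound hN (Nrm_diff hnu0 (fun i => hnu _ i (h0 i) (h1 i)) hX0b hbe0
    (hdecay t))) _.
  rewrite /K0 -!mulrA ler_wpM2l ?sqrtr_ge0 //.
  by rewrite le_eqVlt; apply/orP; left; apply/eqP; field; rewrite gt_eqF.
have [C [eps [hC heps hNe hfin]]] := final_num hN (ltn0Sn r) hg0 hg2 hK0.
exists C, eps; split => // t.
exact: le_trans (hmu t) (hfin t).
Qed.
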